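(* Let $(\Omega,\Pi)$ be a set with a possibility measure, let $d\ge1$, and let $X_n$ ($n\ge1$) and $X$ be fuzzy variables on $\Omega$ with values in $\mathbb R^d$. (a) If $X_n\to X$ in measure, then $X_n\to X$ almost surely; if $X_n\to X$ almost surely, then $X_n\to X$ weakly almost surely; if $X_n\to X$ weakly almost surely, then $X_n\to X$ weakly in measure. (b) Suppose each $X_n$ is a compact fuzzy variable and $X\equiv c$ is constant for some $c\in\mathbb R^d$ (so its membership function is the indicator $\mathbf 1_{\{c\}}$). Then $X_n\to X$ in distribution if and only if $X_n\to X$ in measure.
   Context: A fuzzy set in $\Omega$ is a function $\pi:\Omega\to[0,1]$ with $\pi(\omega_0)=1$ for some $\omega_0$; its $\alpha$-cut ($\alpha\in(0,1]$) is $\{\pi\ge\alpha\}$. The possibility measure defined by $\pi$ is $\Pi(B)=\sup_{\omega\in B}\pi(\omega)$ for all $B\subseteq\Omega$ (with $\sup\emptyset=0$). A fuzzy variable with values in $E$ is any map $X:\Omega\to E$; its membership function is the fuzzy set $A_X(y)=\Pi(X^{-1}(y))=\sup\pi(X^{-1}(y))$. $X$ is a compact fuzzy variable if all $\alpha$-cuts of $A_X$, $\alpha\in(0,1]$, are nonempty and compact. $|\cdot|$ is the Euclidean norm. Types of convergence: - almost sure: $\Pi(\{\omega: X_n(\omega)\not\to X(\omega)\})=0$ (the set includes those $\omega$ where the limit does not exist); - weakly almost sure: $\Pi(\{\omega: \lim_n X_n(\omega)=X(\omega)\})=1$; - in measure: for every $\epsilon>0$, $\lim_n\Pi(|X_n-X|\ge\epsilon)=0$;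 - weakly in measure: for every $\epsilon>0$, $\lim_n\Pi(|X_n-X|\le\epsilon)=1$; - in distribution (for compact fuzzy variables): for every $\alpha\in(0,1]$, the $\alpha$-cuts $A_{X_n}^\alpha$ converge to $A_X^\alpha$ in the Hausdorff metric on nonempty compact subsets of $\mathbb R^d$. *)

(* Defs.v *)
From Stdlib Require Vectors.Fin.
From Stdlib Require Import Reals Lra List.
Open Scope R_scope.

Record poss_space (Omega : Type) := {
  pi : Omega -> R;
  pi_range : forall w, 0 <= pi w <= 1;
  pi_norm : exists w0, pi w0 = 1
}.
Arguments pi {Omega} _ _.
Arguments pi_range {Omega} _ _.

(** The set of values {0} ∪ {pi w | w ∈ B}; its sup is Π(B) (sup ∅ = 0). *)
Definition Pi_vals {Omega} (P : poss_space Omega) (B : Omega -> Prop) (x : R) : Prop :=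
  x = 0 \/ exists w, B w /\ x = pi P w.

Lemma Pi_vals_bound {Omega} (P : poss_space Omega) B : bound (Pi_vals P B).
Proof.
  exists 1. intros x [->|[w [_ ->]]]; [lra| apply (pi_range P w)].
Qed.

Lemma Pi_vals_ne {Omega} (P : poss_space Omega) B : exists x, Pi_vals P B x.
Proof. exists 0. now left. Qed.

Definition Pi {Omega} (P : poss_space Omega) (B : Omega -> Prop) : R :=
  proj1_sig (completeness (Pi_vals P B) (Pi_vals_bound P B) (Pi_vals_ne P B)).

Definition Vec (d : nat) := Fin.t d -> R.

Fixpoint sum_fin (d : nat) : (Fin.t d -> R) -> R :=
  match d with
  | O => fun _ => 0
  | S n => fun f => f Fin.F1 + sum_fin n (fun i => f (Fin.FS i))
  end.

Definition norm {d} (x : Vec d) : R := sqrt (sum_fin d (fun i => (x i) ^ 2)).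
Definition dist {d} (x y : Vec d) : R := norm (fun i => x i - y i).

Definition vconv {d} (u : nat -> Vec d) (l : Vec d) : Prop :=
  forall eps, eps > 0 -> exists N, forall n, (n >= N)%nat -> dist (u n) l < eps.

Definition memb {Omega d} (P : poss_space Omega) (X : Omega -> Vec d) (y : Vec d) : R :=
  Pi P (fun w => X w = y).

Definition alpha_cut {d} (A : Vec d -> R) (alpha : R) (y : Vec d) : Prop := alpha <= A y.

Definition open_set {d} (U : Vec d -> Prop) : Prop :=
  forall x, U x -> exists r, r > 0 /\ forall y, dist x y < r -> U y.

Definition compact_set {d} (K : Vec d -> Prop) : Prop :=
  forall (I : Type) (U : I -> Vec d -> Prop),
    (forall i, open_set (U i)) ->
    (forall x, K x -> exists i, U i x) ->
    exists l : list I, forall x, K x -> exists i, In i l /\ U i x.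

Definition compact_fuzzy {Omega d} (P : poss_space Omega) (X : Omega -> Vec d) : Prop :=
  forall alpha, 0 < alpha <= 1 ->
    (exists y, alpha_cut (memb P X) alpha y) /\ compact_set (alpha_cut (memb P X) alpha).

(** Hausdorff distance bound: H(A,B) <= e for compact sets A, B. *)
Definition hausdorff_le {d} (A B : Vec d -> Prop) (e : R) : Prop :=
  (forall a, A a -> exists b, B b /\ dist a b <= e) /\
  (forall b, B b -> exists a, A a /\ dist a b <= e).

Definition hausdorff_conv {d} (A : nat -> Vec d -> Prop) (L : Vec d -> Prop) : Prop :=
  forall e, e > 0 -> exists N, forall n, (n >= N)%nat -> hausdorff_le (A n) L e.

Definition conv_as {Omega d} (P : poss_space Omega) (Xs : nat -> Omega -> Vec d) (X : Omega -> Vec d) :=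
  Pi P (fun w => ~ vconv (fun n => Xs n w) (X w)) = 0.

Definition conv_was {Omega d} (P : poss_space Omega) (Xs : nat -> Omega -> Vec d) (X : Omega -> Vec d) :=
  Pi P (fun w => vconv (fun n => Xs n w) (X w)) = 1.

Definition conv_meas {Omega d} (P : poss_space Omega) (Xs : nat -> Omega -> Vec d) (X : Omega -> Vec d) :=
  forall eps, eps > 0 -> Un_cv (fun n => Pi P (fun w => dist (Xs n w) (X w) >= eps)) 0.

Definition conv_wmeas {Omega d} (P : poss_space Omega) (Xs : nat -> Omega -> Vec d) (X : Omega -> Vec d) :=
  forall eps, eps > 0 -> Un_cv (fun n => Pi P (fun w => dist (Xs n w) (X w) <= eps)) 1.

Definition conv_distr {Omega d} (P : poss_space Omega) (Xs : nat -> Omega -> Vec d) (X : Omega -> Vec d) :=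
  forall alpha, 0 < alpha <= 1 ->
    hausdorff_conv (fun n => alpha_cut (memb P (Xs n)) alpha) (alpha_cut (memb P X) alpha).

(* Main.v *)
Require Import Defs.
From Stdlib Require Import Reals Lra Classical.
Open Scope R_scope.

Lemma Pi_lub_prop {Omega} (P : poss_space Omega) B : is_lub (Pi_vals P B) (Pi P B).
Proof. unfold Pi. destruct completeness as [x Hx]. exact Hx. Qed.

Lemma Pi_ub {Omega} (P : poss_space Omega) (B : Omega -> Prop) w : B w -> pi P w <= Pi P B.
Proof. intros H. apply (proj1 (Pi_lub_prop P B)). right. eauto. Qed.

Lemma Pi_nonneg {Omega} (P : poss_space Omega) B : 0 <= Pi P B.
Proof. apply (proj1 (Pi_lub_prop P B)). now left. Qed.

Lemma Pi_lub {Omega} (P : poss_space Omega) (B : Omega -> Prop) a :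
  0 <= a -> (forall w, B w -> pi P w <= a) -> Pi P B <= a.
Proof.
  intros Ha H. apply (proj2 (Pi_lub_prop P B)).
  intros x [->|[w [Bw ->]]]; auto.
Qed.

Lemma Pi_le1 {Omega} (P : poss_space Omega) B : Pi P B <= 1.
Proof. apply Pi_lub; [lra|]. intros w _. apply (pi_range P w). Qed.

Lemma Pi_mono {Omega} (P : poss_space Omega) (B C : Omega -> Prop) :
  (forall w, B w -> C w) -> Pi P B <= Pi P C.
Proof.
  intros H. apply Pi_lub; [apply Pi_nonneg|]. intros w Bw. apply Pi_ub; auto.
Qed.

Lemma Pi_approx {Omega} (P : poss_space Omega) (B : Omega -> Prop) a :
  0 <= a -> a < Pi P B -> exists w, B w /\ a < pi P w.
Proof.
  intros Ha Hlt. apply NNPP. intros Hn.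
  assert (Pi P B <= a). { apply Pi_lub; auto. intros w Bw.
    apply Rnot_lt_le. intros Hl. apply Hn. eauto. }
  lra.
Qed.

Theorem mainTheorem2 (Omega : Type) (P : poss_space Omega) (d : nat) (Hd : (1 <= d)%nat)
  (Xs : nat -> Omega -> Vec d) (X : Omega -> Vec d) :
  ((conv_meas P Xs X -> conv_as P Xs X) /\
   (conv_as P Xs X -> conv_was P Xs X) /\
   (conv_was P Xs X -> conv_wmeas P Xs X)) /\
  ((forall n, compact_fuzzy P (Xs n)) ->
   forall c : Vec d, X = (fun _ => c) ->
   (conv_distr P Xs X <-> conv_meas P Xs X)).
Proof.
  split; [split; [|split]|].
  - intros Hm. unfold conv_as. apply Rle_antisym; [|apply Pi_nonneg].
    apply Pi_lub; [lra|]. intros w Hnc.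
    apply Rnot_lt_le. intros Hp.
    assert (Hex : exists eps, eps > 0 /\ forall N, exists n, (n >= N)%nat /\
               Defs.dist (Xs n w) (X w) >= eps).
    { apply NNPP. intros Hn. apply Hnc. intros eps Heps.
      apply NNPP. intros Hn2. apply Hn. exists eps. split; auto.
      intros N. apply NNPP. intros Hn3. apply Hn2. exists N. intros n Hnn.
      apply Rnot_le_lt. intros Hle. apply Hn3. exists n. split; auto. lra. }
    destruct Hex as [eps [Heps HN]].
    destruct (Hm eps Heps (pi P w) Hp) as [N HN2].
    destruct (HN N) as [n [Hn Hd2]].
    specialize (HN2 n Hn). unfold R_dist in HN2. rewrite Rminus_0_r in HN2.
    rewrite Rabs_right in HN2 by (apply Rle_ge, Pi_nonneg).
    assert (pi P w <= Pi P (fun w0 => Defs.dist (Xs n w0) (X w0) >= eps)) by (apply Pi_ub; auto).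
    lra.
  - intros Has. unfold conv_was. destruct (pi_norm _ P) as [w0 Hw0].
    apply Rle_antisym; [apply Pi_le1|]. rewrite <- Hw0. apply Pi_ub.
    apply NNPP. intros Hn. assert (pi P w0 <= Pi P (fun w => ~ vconv (fun n => Xs n w) (X w)))
      by (apply Pi_ub; auto). unfold conv_as in Has. lra.
  - intros Hw eps Heps e He.
    assert (H0 : 0 <= Rmax 0 (1 - e)) by apply Rmax_l.
    assert (H1 : Rmax 0 (1 - e) < Pi P (fun w => vconv (fun n => Xs n w) (X w))).
    { unfold conv_was in Hw. rewrite Hw. apply Rmax_lub_lt; lra. }
    destruct (Pi_approx _ _ _ H0 H1) as [w [Hcv Hpw]].
    destruct (Hcv eps Heps) as [N HN]. exists N. intros n Hn.
    assert (pi P w <= Pi P (fun w0 => Defs.dist (Xs n w0) (X w0) <= eps)).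
    { apply Pi_ub. left. apply HN. auto. }
    assert (Pi P (fun w0 => Defs.dist (Xs n w0) (X w0) <= eps) <= 1) by apply Pi_le1.
    assert (1 - e <= Rmax 0 (1 - e)) by apply Rmax_r.
    unfold R_dist. apply Rabs_def1; lra.
  - intros Hcomp c ->.
    assert (Hcut : forall alpha y, 0 < alpha <= 1 ->
               alpha_cut (memb P (fun _ : Omega => c)) alpha y <-> y = c).
    { intros alpha y Ha. unfold alpha_cut, memb. split.
      - intros H. apply NNPP. intros Hne.
        assert (Pi P (fun _ : Omega => c = y) <= 0).
        { apply Pi_lub; [lra|]. intros w Hw. exfalso. auto. }
        lra.
      - intros ->. destruct (pi_norm _ P) as [w0 Hw0].
        assert (pi P w0 <= Pi P (fun _ : Omega => c = c)) by (apply Pi_ub; auto). lra. }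
    split.
    + intros Hdist eps Heps e He.
      set (alpha := Rmin (e/2) 1).
      assert (Ha : 0 < alpha <= 1).
      { unfold alpha. split; [apply Rmin_glb_lt; lra | apply Rmin_r]. }
      assert (Hal : alpha < e). { unfold alpha. assert (Rmin (e/2) 1 <= e/2) by apply Rmin_l. lra. }
      destruct (Hdist alpha Ha (eps/2) ltac:(lra)) as [N HN].
      exists N. intros n Hn. destruct (HN n Hn) as [Hh1 _].
      assert (Pi P (fun w => Defs.dist (Xs n w) c >= eps) <= alpha).
      { apply Pi_lub; [lra|]. intros w Hw. apply Rnot_lt_le. intros Hlt.
        assert (Hc : alpha_cut (memb P (Xs n)) alpha (Xs n w)).
        { unfold alpha_cut, memb.
          assert (pi P w <= Pi P (fun w0 => Xs n w0 = Xs n w)) by (apply Pi_ub; auto). lra. }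
        destruct (Hh1 _ Hc) as [b [Hb Hdb]].
        apply (Hcut alpha b Ha) in Hb. subst b. lra. }
      unfold R_dist. rewrite Rminus_0_r. rewrite Rabs_right by (apply Rle_ge, Pi_nonneg).
      lra.
    + intros Hm alpha Ha e He.
      destruct (Hm e He alpha (proj1 Ha)) as [N HN].
      exists N. intros n Hn. specialize (HN n Hn).
      unfold R_dist in HN. rewrite Rminus_0_r in HN.
      rewrite Rabs_right in HN by (apply Rle_ge, Pi_nonneg).
      assert (Hclose : forall a, alpha_cut (memb P (Xs n)) alpha a -> Defs.dist a c <= e).
      { intros a Hac. apply Rnot_lt_le. intros Hlt.
        assert (Pi P (fun w => Xs n w = a) <= Pi P (fun w => Defs.dist (Xs n w) c >= e)).
        { apply Pi_mono. intros w ->. lra. }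
        unfold alpha_cut, memb in Hac. lra. }
      split.
      * intros a Hac. exists c. split; [apply Hcut; auto|]. apply Hclose; auto.
      * intros b Hb. apply (Hcut alpha b Ha) in Hb. subst b.
        destruct (proj1 (Hcomp n alpha Ha)) as [a Hac].
        exists a. split; auto.
Qed.
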